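(* Let $P\in\mathbb{R}^{n_x\times n_x}$ and $R\in\mathbb{R}^{n_z\times n_z}$ be symmetric positive definite, let $H\in\mathbb{R}^{n_z\times n_x}$ have full row rank, and let $\bar x\in\mathbb{R}^{n_x}$, $z\in\mathbb{R}^{n_z}$. Let $x_0$ be a random vector in $\mathbb{R}^{n_x}$ with $\mathbb{E}[x_0]=\bar x$ and $\mathrm{Cov}(x_0)=P$. Define the closed-form update $$x_1=\Phi\,x_0+E\,c,\qquad \Phi=I+E\,\Omega\,F^\top,$$ with $E,F,\Omega,c$ as in the context. Then $$\mathbb{E}[x_1]=\bar x+PH^\top(HPH^\top+R)^{-1}(z-H\bar x),\qquad \mathrm{Cov}(x_1)=\Phi P\Phi^\top=P-PH^\top(HPH^\top+R)^{-1}HP,$$ i.e. the update reproduces the Kalman posterior mean and covariance.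
   Context: $R^{-1/2}$ denotes the inverse of the unique symmetric positive definite square root of $R$. Let $D=R^{-1/2}HPH^\top R^{-1/2}\in\mathbb{R}^{n_z\times n_z}$ (symmetric positive definite), with eigendecomposition $D=V\Lambda V^\top$, $V$ orthogonal, $\Lambda=\mathrm{diag}(\alpha_1,\dots,\alpha_{n_z})$, $\alpha_i>0$. Define $E=PH^\top R^{-1/2}V\in\mathbb{R}^{n_x\times n_z}$, $F^\top=V^\top R^{-1/2}H\in\mathbb{R}^{n_z\times n_x}$, $\tilde z=V^\top R^{-1/2}z$, $\tilde x=F^\top\bar x$. Let $\Omega=\mathrm{diag}(\omega_1,\dots,\omega_{n_z})$ with $\omega_i=\big((1+\alpha_i)^{-1/2}-1\big)/\alpha_i$, and $c\in\mathbb{R}^{n_z}$ with $c_i=\dfrac{\alpha_i\tilde z_i+\tilde x_i(1-\sqrt{1+\alpha_i})}{\alpha_i(1+\alpha_i)}$. *)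

(* Defs.v *)
From HB Require Import structures.
From mathcomp Require Import all_boot all_order all_algebra.
From mathcomp Require Import all_classical all_reals all_analysis.
Set Implicit Arguments. Unset Strict Implicit. Unset Printing Implicit Defensive.
Import Order.TTheory GRing.Theory Num.Theory.
Local Open Scope ring_scope.

Definition spd (R : realType) (n : nat) (A : 'M[R]_n) : Prop :=
  A^T = A /\ forall v : 'cV[R]_n, v != 0 -> 0 < (v^T *m A *m v) 0 0.

Definition rv_comp (T : Type) (R : realType) (n : nat)
  (x : T -> 'cV[R]_n) (i : 'I_n) : T -> R := fun w => x w i 0.

Definition L2_rvec d (T : measurableType d) (R : realType)
  (Pr : probability T R) (n : nat) (x : T -> 'cV[R]_n) : Prop :=
  forall i, rv_comp x i \in Lfun Pr 2.

Definition rv_mean d (T : measurableType d) (R : realType)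
  (Pr : probability T R) (n : nat) (x : T -> 'cV[R]_n) : 'cV[R]_n :=
  \col_i fine ('E_Pr[rv_comp x i])%E.

Definition rv_cov d (T : measurableType d) (R : realType)
  (Pr : probability T R) (n : nat) (x : T -> 'cV[R]_n) : 'M[R]_n :=
  \matrix_(i, j) fine (covariance Pr (rv_comp x i) (rv_comp x j)).

(* Main.v *)
Require Import Defs.
From HB Require Import structures.
From mathcomp Require Import all_boot all_order all_algebra.
From mathcomp Require Import all_classical all_reals all_analysis.
From mathcomp Require Import ring lra.
Import Order.TTheory GRing.Theory Num.Theory.
Local Open Scope ring_scope.

Lemma spd_unit (R : realType) n (A : 'M[R]_n) : spd A -> A \in unitmx.
Proof.
case=> _ hpos; rewrite -row_free_unit -kermx_eq0.
apply/eqP/row_matrixP => i; rewrite row0; apply/eqP/negPn/negP => hi.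
set u := row i (kermx A) in hi.
have hu : u^T != 0 by rewrite -trmx0 (inj_eq (@trmx_inj _ _ _)).
have := hpos _ hu; rewrite trmxK /u -row_mul mulmx_ker row0 mul0mx mxE ltxx.
by [].
Qed.

Lemma sc1 (R : realType) (a : R) : 0 < a ->
  let w := ((Num.sqrt (1 + a))^-1 - 1) / a in w + w + w * a * w = - (1 + a)^-1.
Proof.
move=> ha /=.
have hs : Num.sqrt (1 + a) ^+ 2 = 1 + a by rewrite sqr_sqrtr // addr_ge0 // ltW.
have s0 : 0 < Num.sqrt (1 + a) by rewrite sqrtr_gt0 addr_gt0.
move: hs s0; set s := Num.sqrt (1 + a) => hs s0.
have ea : a = s ^+ 2 - 1 by rewrite hs addrC addKr.
have a0 : a != 0 by rewrite gt_eqF.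
move: a0; rewrite ea => a0.
have s0' : s != 0 by rewrite gt_eqF.
have s1 : 1 + (s ^+ 2 - 1) != 0 by rewrite addrC subrK expf_neq0.
field. by rewrite s0' a0 s1.
Qed.

Lemma sc2 (R : realType) (a y x : R) : 0 < a ->
  let s := Num.sqrt (1 + a) in
  ((s^-1 - 1) / a) * x + (a * y + x * (1 - s)) / (a * (1 + a)) = (1 + a)^-1 * (y - x).
Proof.
move=> ha /=.
have hs : Num.sqrt (1 + a) ^+ 2 = 1 + a by rewrite sqr_sqrtr // addr_ge0 // ltW.
have s0 : 0 < Num.sqrt (1 + a) by rewrite sqrtr_gt0 addr_gt0.
move: hs s0; set s := Num.sqrt (1 + a) => hs s0.
have ea : a = s ^+ 2 - 1 by rewrite hs addrC addKr.
have a0 : a != 0 by rewrite gt_eqF.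
move: a0; rewrite ea => a0.
have s0' : s != 0 by rewrite gt_eqF.
have s1 : 1 + (s ^+ 2 - 1) != 0 by rewrite addrC subrK expf_neq0.
field. by rewrite s0' a0 s1.
Qed.
Section ProbLin.
Context d (T : measurableType d) (R : realType) (Pr : probability T R).
Local Notation L2 := (Lfun Pr 2%:E).

Lemma L2_L1 (f : T -> R) : f \in L2 -> f \in Lfun Pr 1.
Proof. by apply: Lfun_subset12; exact: fin_num_measure. Qed.

Lemma L2D {f g : T -> R} : f \in L2 -> g \in L2 -> (f \+ g) \in L2.
Proof.
move=> hf hg.
have p1 : (1 <= (2%:E : \bar R))%E by rewrite lee_fin ler1n.
exact: (@rpredD _ (hoelder_Lfun__canonical__Algebra_AddClosed Pr p1) f g hf hg).
Qed.

Lemma L2Z a {f : T -> R} : f \in L2 -> (a \o* f) \in L2.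
Proof. by apply: Lfun_scale; rewrite ler1n. Qed.

Lemma L2cst c : cst c \in L2.
Proof. exact: Lfun_cst. Qed.

Lemma L2sum n (a : 'I_n -> R) (X : 'I_n -> T -> R) :
  (forall j, X j \in L2) -> (\sum_(j < n) a j \o* X j) \in L2.
Proof.
move=> hX; elim/big_rec: _ => [|j f _ hf]; first exact: (L2cst 0).
by have := L2D (L2Z (a j) (hX j : X j \in L2)) hf.
Qed.

Lemma mean_lin n (a : 'I_n -> R) (X : 'I_n -> T -> R) (b : R) :
  (forall j, X j \in L2) ->
  ('E_Pr[((\sum_(j < n) a j \o* X j) \+ cst b)%R] =
   (\sum_(j < n) a j * fine 'E_Pr[X j] + b)%:E)%E.
Proof.
move=> hX.
rewrite expectationD ?L2_L1 ?L2sum ?L2cst // expectation_cst EFinD.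
congr (_ + _)%E.
suff [] : (\sum_(j < n) a j \o* X j)%R \in L2 /\ ('E_Pr[(\sum_(j < n) a j \o* X j)%R] =
   (\sum_(j < n) a j * fine 'E_Pr[X j])%:E)%E by [].
elim/big_rec2: _ => [|j y g _ [hg hy]]; first by split; [exact: (L2cst 0)|exact: (expectation_cst Pr 0)].
rewrite -[((a j \o* X j) + g)%R]/((a j \o* X j) \+ g)%R.
split; first exact: L2D (L2Z (a j) (hX j : X j \in L2)) hg.
rewrite expectationD ?L2_L1 ?L2Z //.
rewrite expectationZl ?L2_L1 // hy EFinD EFinM fineK // expectation_fin_num // L2_L1 //.
Qed.
Lemma L2M1 (f g : T -> R) : f \in L2 -> g \in L2 -> (f * g)%R \in Lfun Pr 1.
Proof. by move=> hf hg; have := Lfun2_mul_Lfun1 hf hg. Qed.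

Lemma cov_lin n (a : 'I_n -> R) (X : 'I_n -> T -> R) (b : R) (Z : T -> R) :
  (forall j, X j \in L2) -> Z \in L2 ->
  covariance Pr ((\sum_(j < n) a j \o* X j) \+ cst b)%R Z =
   ((\sum_(j < n) a j * fine (covariance Pr (X j) Z))%:E)%E.
Proof.
move=> hX hZ.
rewrite covarianceDl ?L2sum ?L2cst // covariance_cst_l adde0.
suff [] : (\sum_(j < n) a j \o* X j)%R \in L2 /\ (covariance Pr (\sum_(j < n) a j \o* X j)%R Z =
   (\sum_(j < n) a j * fine (covariance Pr (X j) Z))%:E)%E by [].
elim/big_rec2: _ => [|j y g _ [hg hy]]; first by split; [exact: (L2cst 0)|exact: (covariance_cst_l Pr 0 Z)].
rewrite -[((a j \o* X j) + g)%R]/((a j \o* X j) \+ g)%R.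
split; first exact: L2D (L2Z (a j) (hX j : X j \in L2)) hg.
rewrite covarianceDl ?L2Z //.
rewrite covarianceZl ?L2M1 ?L2_L1 //.
rewrite hy EFinD EFinM fineK // covariance_fin_num // ?L2M1 ?L2_L1 //.
Qed.
Lemma comp_aff m n (A : 'M[R]_(m,n)) (b : 'cV[R]_m) (x : T -> 'cV[R]_n) i :
  rv_comp (fun w => A *m x w + b) i = ((\sum_(j < n) A i j \o* rv_comp x j) \+ cst (b i 0))%R.
Proof.
apply/funext => w; rewrite /rv_comp /= fct_sumE !mxE; congr (_ + _).
by apply: eq_bigr => j _; rewrite /= mulrC.
Qed.

Lemma L2_aff m n (A : 'M[R]_(m,n)) (b : 'cV[R]_m) (x : T -> 'cV[R]_n) i :
  L2_rvec Pr x -> rv_comp (fun w => A *m x w + b) i \in L2.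
Proof. by move=> hx; rewrite comp_aff; apply: L2D; [exact: L2sum|exact: L2cst]. Qed.

Lemma aff_mean m n (A : 'M[R]_(m,n)) (b : 'cV[R]_m) (x : T -> 'cV[R]_n) :
  L2_rvec Pr x -> rv_mean Pr (fun w => A *m x w + b) = A *m rv_mean Pr x + b.
Proof.
move=> hx; apply/matrixP => i k; rewrite (ord1 k) !mxE comp_aff mean_lin //=.
by congr (_ + _); apply: eq_bigr => j _; rewrite mxE.
Qed.

Lemma aff_cov m n (A : 'M[R]_(m,n)) (b : 'cV[R]_m) (x : T -> 'cV[R]_n) :
  L2_rvec Pr x -> rv_cov Pr (fun w => A *m x w + b) = A *m rv_cov Pr x *m A^T.
Proof.
move=> hx; apply/matrixP => i k; rewrite !mxE.
rewrite {1}comp_aff cov_lin ?L2_aff //=.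
under eq_bigr => j _ do rewrite covarianceC comp_aff cov_lin ?L2_aff //= mulr_sumr.
rewrite exchange_big /=; apply: eq_bigr => l _.
rewrite !mxE mulr_suml; apply: eq_bigr => j _.
by rewrite !mxE (covarianceC _ (rv_comp x j)) -mulrA (mulrC (A k l)).
Qed.
End ProbLin.

Theorem theorem1 (R : realType) (nx nz : nat)
  (P : 'M[R]_nx) (Rm : 'M[R]_nz) (H : 'M[R]_(nz, nx))
  (xbar : 'cV[R]_nx) (z : 'cV[R]_nz)
  (d : measure_display) (T : measurableType d) (Pr : probability T R)
  (x0 : T -> 'cV[R]_nx)
  (Rsq : 'M[R]_nz) (V : 'M[R]_nz) (alpha : 'I_nz -> R) :
  spd P -> spd Rm -> \rank H = nz ->
  L2_rvec Pr x0 -> rv_mean Pr x0 = xbar -> rv_cov Pr x0 = P ->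
  (* Rsq is the unique SPD square root of Rm, so invmx Rsq = R^{-1/2} *)
  spd Rsq -> Rsq *m Rsq = Rm ->
  let Rmh := invmx Rsq in
  let D := Rmh *m H *m P *m H^T *m Rmh in
  V^T *m V = 1%:M ->
  D = V *m diag_mx (\row_i alpha i) *m V^T ->
  (forall i, 0 < alpha i) ->
  let E := P *m H^T *m Rmh *m V in
  let Ft := V^T *m Rmh *m H in
  let zt := V^T *m Rmh *m z in
  let xt := Ft *m xbar in
  let Om := diag_mx (\row_i (((Num.sqrt (1 + alpha i))^-1 - 1) / alpha i)) in
  let c := \col_i ((alpha i * zt i 0 + xt i 0 * (1 - Num.sqrt (1 + alpha i)))
                    / (alpha i * (1 + alpha i))) in
  let Phi := 1%:M + E *m Om *m Ft in
  let x1 := fun w => Phi *m x0 w + E *m c in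
  let K := P *m H^T *m invmx (H *m P *m H^T + Rm) in
  rv_mean Pr x1 = xbar + K *m (z - H *m xbar) /\
  rv_cov Pr x1 = Phi *m P *m Phi^T /\
  Phi *m P *m Phi^T = P - K *m H *m P.
Proof.
move=> [hPt hPpos] _ _ hL2 hmean hcov [hRt hRpos] hRR Rmh D hVV hD halpha.
move=> E Ft zt xt Om c Phi x1 K.
have hU : Rsq \in unitmx by apply: spd_unit.
have hS : Rmh^T = Rmh by rewrite /Rmh trmx_inv hRt.
have hSR : Rmh *m Rsq = 1%:M by rewrite /Rmh mulVmx.
have hRS : Rsq *m Rmh = 1%:M by rewrite /Rmh mulmxV.
have hVV' : V *m V^T = 1%:M := mulmx1C hVV.
set L := diag_mx (\row_i alpha i) in hD.
set L' := diag_mx (\row_i (1 + alpha i)^-1).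
have hET : E^T = Ft *m P by rewrite /E /Ft !trmx_mul hPt hS trmxK !mulmxA.
have hPF : P *m Ft^T = E by rewrite -[E]trmxK hET [RHS]trmx_mul hPt.
have hFE : Ft *m E = L.
  have -> : Ft *m E = V^T *m D *m V by rewrite /Ft /E /D !mulmxA.
  by rewrite hD !mulmxA hVV mul1mx -mulmxA hVV mulmx1.
have hsum : H *m P *m H^T + Rm = Rsq *m V *m (L + 1%:M) *m V^T *m Rsq.
  have e1 : V *m (L + 1%:M) *m V^T = D + 1%:M by rewrite mulmxDr mulmxDl mulmx1 hVV' hD.
  have -> : Rsq *m V *m (L + 1%:M) *m V^T *m Rsq = Rsq *m (V *m (L + 1%:M) *m V^T) *m Rsq
    by rewrite !mulmxA.
  rewrite e1 mulmxDr mulmxDl mulmx1 hRR; congr (_ + _).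
  by rewrite /D !mulmxA hRS mul1mx -[RHS]mulmxA hSR mulmx1.
have hLL : (L + 1%:M) *m L' = 1%:M.
  apply/matrixP => i j; rewrite mul_mx_diag !mxE.
  case: (eqVneq i j) => [->|hij]; last by rewrite mulr0n addr0 mul0r.
  by rewrite mulr1n addrC mulfV // gt_eqF // addr_gt0.
have hM : (H *m P *m H^T + Rm) *m (Rmh *m V *m L' *m V^T *m Rmh) = 1%:M.
  rewrite hsum -!mulmxA (mulmxA Rsq Rmh) hRS mul1mx (mulmxA V^T V) hVV mul1mx.
  by rewrite (mulmxA (L + 1%:M) L') hLL mul1mx (mulmxA V V^T) hVV' mul1mx hRS.
have hinv : invmx (H *m P *m H^T + Rm) = Rmh *m V *m L' *m V^T *m Rmh.
  have [hu _] := mulmx1_unit hM.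
  by rewrite -[RHS]mul1mx -(mulVmx hu) -[RHS]mulmxA hM mulmx1.
have hK : K = E *m L' *m V^T *m Rmh by rewrite /K hinv /E !mulmxA.
have hKHP : K *m H *m P = E *m L' *m E^T by rewrite hK hET /Ft !mulmxA.
split.
  rewrite /x1 aff_mean // hmean hK.
  have hzt : V^T *m Rmh *m (z - H *m xbar) = zt - xt by rewrite mulmxBr /zt /xt /Ft !mulmxA.
  rewrite /Phi mulmxDl mul1mx -addrA; congr (_ + _).
  have -> : E *m L' *m V^T *m Rmh *m (z - H *m xbar) = E *m (L' *m (zt - xt))
    by rewrite -hzt !mulmxA.
  have -> : E *m Om *m Ft *m xbar + E *m c = E *m (Om *m xt + c)
    by rewrite mulmxDr /xt !mulmxA.
  congr (_ *m _); apply/matrixP => i j; rewrite (ord1 j) !mul_diag_mx !mxE.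
  exact: sc2.
split; first by rewrite /x1 aff_cov // hcov.
rewrite hKHP.
have hOmT : Om^T = Om by rewrite /Om tr_diag_mx.
have hPhiT : Phi^T = 1%:M + Ft^T *m (Om *m E^T) by rewrite /Phi linearD /= trmx1 !trmx_mul hOmT.
have h1 : E *m Om *m Ft *m P = E *m Om *m E^T by rewrite hET !mulmxA.
have h2 : P *m (Ft^T *m (Om *m E^T)) = E *m Om *m E^T by rewrite !mulmxA hPF.
have h3 : E *m Om *m Ft *m P *m (Ft^T *m (Om *m E^T)) = E *m (Om *m L *m Om) *m E^T.
  by rewrite -hFE -(mulmxA (E *m Om *m Ft) P) h2 !mulmxA.
have hOm : Om + Om + Om *m L *m Om = - L'.
  rewrite !mulmx_diag; apply/matrixP => i j; rewrite !mxE.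
  case: (eqVneq i j) => [->|hij]; last by rewrite !mulr0n !addr0 oppr0.
  by rewrite !mulr1n; exact: sc1.
rewrite hPhiT /Phi mulmxDl mul1mx mulmxDl !mulmxDr !mulmx1 h3 h1 h2.
rewrite -[L']opprK -hOm mulmxN mulNmx opprK !mulmxDr !mulmxDl.
by rewrite !addrA.
Qed.
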